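(* Let $F\colon S^2\to S^2$ be a Thurston map of degree $d$ with $k=\#\operatorname{post}(F)\ge3$ postcritical points, and let $\mathcal{C}\supset\operatorname{post}(F)$ be an oriented Jordan curve. Let $\gamma^0=E_0,\dots,E_{k-1}$ be the $0$-edges, positively oriented and listed in their cyclic order along $\mathcal{C}$. Let $\gamma^1=E'_0,\dots,E'_{kd-1}$ be any Eulerian circuit in the graph of $1$-edges. Then $F\colon\gamma^1\to\gamma^0$ is a $d$-fold cover if and only if every $1$-edge is positively oriented in $\gamma^1$ (i.e. traversed by $\gamma^1$ in its positive orientation).
   Context: A Thurston map is an orientation-preserving, postcritically finite branched covering of $S^2$. The postcritical points divide $\mathcal{C}$ into $k$ closed arcs, the $0$-edges; a $0$-edge is positively oriented if its orientation agrees with that of $\mathcal{C}$. The $1$-vertices are the points of $F^{-1}(\operatorname{post}(F))$; a $1$-edge is the closure of a component of $F^{-1}(\mathcal{C})\setminus F^{-1}(\operatorname{post}(F))$; there are $kd$ of them and $F$ maps each $1$-edge homeomorphically onto a $0$-edge. An oriented $1$-edge $E$ is positively oriented if $F$ maps its initial/terminal point to the initial/terminal point of the positively oriented $0$-edge $F(E)$. An Eulerian circuit in the graph of $1$-edges is a cyclic sequence of oriented $1$-edges $E'_0,\dots,E'_{kd-1}$ (indices mod $kd$) in which each $1$-edge appears exactly once and the terminal point of $E'_j$ is the initial point of $E'_{j+1}$; the $1$-edge in $\gamma^1$ then carries the orientation given by this traversal. $F\colon\gamma^1\to\gamma^0$ is called a $d$-fold cover if $F$ maps succeeding $1$-edges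 of $\gamma^1$ to succeeding $0$-edges of $\gamma^0$; equivalently, if with $m$ the index such that $F(E'_0)=E_m$, one has $F(E'_j)=E_{m+j}$ (indices mod $k$) for all $j=0,\dots,kd-1$. *)

(* Defs.v *)
From mathcomp Require Import all_boot.
Set Implicit Arguments. Unset Strict Implicit. Unset Printing Implicit Defensive.

(* Postcritical points p_0,...,p_{k-1} listed in the cyclic order of C are
   indexed by 'I_k; the positively oriented 0-edge E_m runs from p_m to
   p_{m+1} = p_(ordS m).  1-vertices form a finType V, Fv : V -> 'I_k is F on
   1-vertices (F(v) = p_(Fv v)); 1-edges form a finType E, Fe e = m means
   F(e) = E_m; endpt e true / endpt e false are the two endpoints of e. *)

Definition initial (V E : Type) (endpt : E -> bool -> V) (oe : E * bool) : V :=
  endpt oe.1 oe.2.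
Definition terminal (V E : Type) (endpt : E -> bool -> V) (oe : E * bool) : V :=
  endpt oe.1 (~~ oe.2).

(* F maps each 1-edge homeomorphically onto its 0-edge: its two endpoints go
   to the two endpoints p_m, p_{m+1} of E_m = F(e). *)
Definition edges_over (k : nat) (V E : Type) (Fv : V -> 'I_k) (Fe : E -> 'I_k)
  (endpt : E -> bool -> V) : Prop :=
  forall e : E, exists b : bool,
    Fv (endpt e b) = Fe e /\ Fv (endpt e (~~ b)) = ordS (Fe e).

Definition pos_oriented (k : nat) (V E : Type) (Fv : V -> 'I_k) (Fe : E -> 'I_k)
  (endpt : E -> bool -> V) (oe : E * bool) : Prop :=
  Fv (initial endpt oe) = Fe oe.1 /\ Fv (terminal endpt oe) = ordS (Fe oe.1).

Definition eulerian_circuit (N : nat) (V E : Type) (endpt : E -> bool -> V)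
  (c : 'I_N -> E * bool) : Prop :=
  bijective (fun j => (c j).1) /\
  forall j : 'I_N, terminal endpt (c j) = initial endpt (c (ordS j)).

(* F : gamma^1 -> gamma^0 is a d-fold cover: succeeding 1-edges of gamma^1
   are mapped to succeeding 0-edges of gamma^0 (cyclically). *)
Definition dfold_cover (N k : nat) (E : Type) (Fe : E -> 'I_k)
  (c : 'I_N -> E * bool) : Prop :=
  forall j : 'I_N, Fe (c (ordS j)).1 = ordS (Fe (c j).1).

(* Main.v *)
Require Import Defs.
From mathcomp Require Import all_boot.
From mathcomp Require Import zify.

Lemma ordS_neq1 k (x : 'I_k) : 3 <= k -> ordS x <> x.
Proof.
move=> hk /(congr1 val) /=; have := ltn_ord x => h.
case: (ltnP x.+1 k) => h1.
  rewrite modn_small //; lia.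
have -> : x.+1 = k by lia.
rewrite modnn; lia.
Qed.

Lemma ordS_neq2 k (x : 'I_k) : 3 <= k -> ordS (ordS x) <> x.
Proof.
move=> hk /(congr1 val) /=; have := ltn_ord x => h.
case: (ltnP x.+1 k) => h1.
  rewrite (@modn_small x.+1) //.
  case: (ltnP x.+2 k) => h2.
    rewrite modn_small //; lia.
  have -> : x.+2 = k by lia.
  rewrite modnn; lia.
have -> : x.+1 = k by lia.
rewrite modnn modn_small; lia.
Qed.

Theorem lemma3p6 (k d : nat) (V E : finType) (Fv : V -> 'I_k) (Fe : E -> 'I_k)
  (endpt : E -> bool -> V) :
  3 <= k -> 0 < d -> #|E| = k * d ->
  edges_over Fv Fe endpt ->
  forall c : 'I_(k * d) -> E * bool,
    eulerian_circuit endpt c ->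
    (dfold_cover Fe c <-> forall j : 'I_(k * d), pos_oriented Fv Fe endpt (c j)).
Proof.
move=> hk _ _ Hov c [_ Hc]; split; last first.
  move=> H j; have [_ T] := H j; have [I _] := H (ordS j).
  by rewrite -I -T Hc.
move=> D j.
rewrite /pos_oriented /initial /terminal.
case E1: (c j) => [e b] /=.
have [b0 [h1 h2]] := Hov e.
case: (eqVneq b b0) => [eb|nb]; first by rewrite eb.
exfalso.
have hb : b = ~~ b0 by move: nb; case: (b); case: (b0).
have T : Fv (terminal endpt (c j)) = Fe e.
  by rewrite /terminal E1 /= hb negbK.
have Dj := D j; rewrite E1 /= in Dj.
have := Hc j; rewrite /terminal /initial => Hcj.
case E2: (c (ordS j)) => [e2 b2]; rewrite E2 /= in Dj Hcj.
rewrite E1 /= in T Hcj.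
have [b1 [g1 g2]] := Hov e2.
case: (eqVneq b2 b1) => [eb|nb2].
  move: g1; rewrite -eb -Hcj /terminal /= in T *.
  rewrite T Dj => /esym; exact: ordS_neq1.
have hb2 : b2 = ~~ b1 by move: nb2; case: (b2); case: (b1).
move: g2; rewrite -hb2 -Hcj.
rewrite /terminal /= in T; rewrite T Dj => /esym; exact: ordS_neq2.
Qed.
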